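(* For $k=2$ the following equivalences hold in $\{m_1,m_2,m_3\}^*$: $m_1m_3\sim m_3m_1$, $m_1m_2m_2m_3\sim m_2m_3m_1m_2$, $m_1m_2m_3m_2\sim m_2m_1m_2m_3$, $m_1m_1m_2m_2m_2m_3\sim m_2m_3m_1m_1m_2m_2$, and $m_1m_2m_2m_2m_3m_3\sim m_2m_2m_3m_3m_1m_2$. Moreover, $m_1m_2m_2m_2m_3m_3\sim m_2m_2m_3m_3m_1m_2$ cannot be derived from the first three equivalences, i.e. these two words are not related by the smallest congruence containing the first three pairs.
   Context: A system of $2$ stacks in series consists of an input queue, stack 1, stack 2, and an output queue. A state records the contents of each stack and each queue (finitely many distinct labelled elements); there is one additional ''illegal'' state $\varnothing$. Moves: $m_1$ moves the front of the input queue onto stack 1; $m_2$ pops stack 1 and pushes onto stack 2; $m_3$ pops stack 2 and enqueues at the back of the output queue. For a word $w$ and state $s$, $w\ast s$ is obtained by applying the moves left to right, with $w\ast s=\varnothing$ if some move is illegal and $w\ast\varnothing=\varnothing$. For words $x,y$, $x\sim y$ iff $x\ast s=y\ast s$ for every state $s$ (including $\varnothing$). *)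

(* Defs.v *)
From HB Require Import structures.
From mathcomp Require Import all_boot.
Set Implicit Arguments. Unset Strict Implicit. Unset Printing Implicit Defensive.

(* Moves of a system of 2 stacks in series. *)
Inductive move := m1 | m2 | m3.
Definition move_eqb (a b : move) : bool :=
  match a, b with m1, m1 | m2, m2 | m3, m3 => true | _, _ => false end.
Lemma move_eqP : Equality.axiom move_eqb.
Proof. by case; case; constructor. Qed.
HB.instance Definition _ := hasDecEq.Build move move_eqP.

(* A state: (input queue, stack 1, stack 2, output queue); elements are
   labelled by naturals.  Queues: front = head of list, back = end of list.
   Stacks: top = head of list. *)
Definition state := (seq nat * seq nat * seq nat * seq nat)%type.

Definition valid_state (s : state) : bool :=
  let: (i, a, b, o) := s in uniq (i ++ a ++ b ++ o).

(* None represents the illegal state. *)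
Definition step (m : move) (s : option state) : option state :=
  match s with
  | None => None
  | Some (i, a, b, o) =>
    match m with
    | m1 => if i is x :: i' then Some (i', x :: a, b, o) else None
    | m2 => if a is x :: a' then Some (i, a', x :: b, o) else None
    | m3 => if b is x :: b' then Some (i, a, b', rcons o x) else None
    end
  end.

(* w * s : apply moves left to right. *)
Fixpoint act (w : seq move) (s : option state) : option state :=
  match w with
  | [::] => s
  | m :: w' => act w' (step m s)
  end.

Definition stack_equiv (x y : seq move) : Prop :=
  forall s : option state,
    (match s with Some t => valid_state t | None => true end) ->
    act x s = act y s.

Inductive derivable (R : seq (seq move * seq move)) : seq move -> seq move -> Prop :=
  | der_rule : forall (u v x y : seq move), (x, y) \in R -> derivable R (u ++ x ++ v) (u ++ y ++ v)
  | der_refl : forall x, derivable R x x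
  | der_sym : forall x y, derivable R x y -> derivable R y x
  | der_trans : forall x y z, derivable R x y -> derivable R y z -> derivable R x z.

(* Main.v *)
Require Import Defs.
From mathcomp Require Import all_boot.

Definition tab (m : move) : seq nat :=
  match m with
  | m1 => [:: 1; 2; 2; 2; 2; 2; 2; 2]
  | m2 => [:: 2; 3; 2; 4; 5; 2; 2; 2]
  | m3 => [:: 2; 2; 2; 2; 2; 6; 7; 2]
  end.

Definition delta (q : 'I_8) (m : move) : 'I_8 := inord (nth 0 (tab m) q).
Definition run (q : 'I_8) (w : seq move) : 'I_8 := foldl delta q w.

Definition Rel := [:: ([:: m1; m3], [:: m3; m1]);
                  ([:: m1; m2; m2; m3], [:: m2; m3; m1; m2]);
                  ([:: m1; m2; m3; m2], [:: m2; m1; m2; m3])].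

Lemma rel_ok x y : (x, y) \in Rel -> forall q, run q x = run q y.
Proof.
rewrite !inE => /orP[/eqP[-> ->]|/orP[/eqP[-> ->]|/eqP[-> ->]]] q;
  apply/val_inj; case: q => [[|[|[|[|[|[|[|[|q]]]]]]]] Hq] //=;
  rewrite /run /= /delta /= ?inordK //.
Qed.

Lemma der_run a b : derivable Rel a b -> forall q, run q a = run q b.
Proof.
move=> D; elim: D => [u v x y Hr q|x q|x y _ IH q|x y z _ IH1 _ IH2 q].
- rewrite /run !foldl_cat; congr foldl; exact: rel_ok.
- by [].
- by rewrite IH.
- by rewrite IH1 IH2.
Qed.

Theorem mainTheorem9 :
  stack_equiv [:: m1; m3] [:: m3; m1] /\
  stack_equiv [:: m1; m2; m2; m3] [:: m2; m3; m1; m2] /\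
  stack_equiv [:: m1; m2; m3; m2] [:: m2; m1; m2; m3] /\
  stack_equiv [:: m1; m1; m2; m2; m2; m3] [:: m2; m3; m1; m1; m2; m2] /\
  stack_equiv [:: m1; m2; m2; m2; m3; m3] [:: m2; m2; m3; m3; m1; m2] /\
  ~ derivable [:: ([:: m1; m3], [:: m3; m1]);
                  ([:: m1; m2; m2; m3], [:: m2; m3; m1; m2]);
                  ([:: m1; m2; m3; m2], [:: m2; m1; m2; m3])]
      [:: m1; m2; m2; m2; m3; m3] [:: m2; m2; m3; m3; m1; m2].
Proof.
split; [|split; [|split; [|split; [|split]]]];
  try (case=> [[[[i a] b] o]|] _ //;
       case: i => [|x1 [|x2 i]]; case: a => [|y1 [|y2 [|y3 a]]];
       case: b => [|z1 [|z2 [|z3 b]]]; reflexivity).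
move/der_run => /(_ ord0) /(congr1 val).
by rewrite /run /= /delta /= ?inordK.
Qed.
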